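(* Let $(S,\omega)$ be a real symplectic vector space of dimension $2$ with positive polarization $E$, and let $(g,z)\in\mathrm{Mp}_*(S,E)$ (so $\operatorname{tr}(g)\neq2$). Let $k\in\mathbb Z$ be such that $\arg(z)\in[k\tfrac\pi2,(k+1)\tfrac\pi2)$ and let $\epsilon=0$ if $\operatorname{tr}(g)>2$ and $\epsilon=1$ otherwise. Then $$m(g,z)=k+\tfrac12\big(1-(-1)^{k+\epsilon}\big)\mod 4.$$
   Context: A positive polarization of $S$ is a Lagrangian subspace $E\subset S\otimes\mathbb C$ with $\frac1i\omega(x,\bar x)>0$ for all nonzero $x\in E$. For positive polarizations $E_a,E_b$, $\pi_{E_b,E_a}:E_b\to E_a$ is the restriction to $E_b$ of the projection onto $E_a$ with kernel $\overline{E_b}$; $\Psi_{E_a,E_b}:=\pi_{E_b,E_a}^*$ on top exterior powers of duals; $\zeta(E_a,E_b,E_c)$ is defined by $\Psi_{E_a,E_c}=\zeta(E_a,E_b,E_c)\Psi_{E_b,E_c}\circ\Psi_{E_a,E_b}$ and $\zeta^{1/2}$ is its continuous square root equal to $1$ when the three coincide. $\mathrm{Mp}(S,E)$ is the group of pairs $(g,z)\in\mathrm{Sp}(S)\times\mathbb C$ with $z^2=\det(g^{-1}\pi_{E,gE}:E\to E)$, product $(g',z')(g,z)=(g'g,\zeta^{1/2}(g'gE,g'E,E)z'z)$. Let $j$ be the complex structure on $S$ with $E=\ker(j-i\,\mathrm{id})$; $\mathrm{sym}(S,j)$ is the space of endomorphisms symmetric for the scalar product $\omega(X,jY)$; for $A\in\mathrm{sym}(S,j)$,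 ${\det}^{1/2}(\tfrac12\mathrm{id}+iA)$ is the square root depending continuously on $A$ and positive at $A=0$. $\mathrm{Sp}_*(S)=\{g\in\mathrm{Sp}(S):\mathrm{id}-g\text{ invertible}\}$, $A(g):=\tfrac12(\mathrm{id}+g)(\mathrm{id}-g)^{-1}j$, $\mathrm{Mp}_*(S,E)=\{(g,z)\in\mathrm{Mp}(S,E):g\in\mathrm{Sp}_*(S)\}$. The index $m(g,z)\in\mathbb Z/4\mathbb Z$ is defined by $z\,{\det}^{1/2}(\tfrac12\mathrm{id}+iA(g))=i^{m(g,z)}/|\det(\mathrm{id}-g)|^{1/2}$. The argument $\arg(z)$ is taken in $\mathbb R/2\pi\mathbb Z$ (so $k$ is determined mod 4). *)

(* Defs.v *)
From Stdlib Require Import Reals Lra ZArith.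
Open Scope R_scope.

Definition CC : Type := (R * R)%type.
Definition Re (z : CC) : R := fst z.
Definition Im (z : CC) : R := snd z.
Definition RtoC (r : R) : CC := (r, 0).
Definition C0 : CC := (0, 0).
Definition C1 : CC := (1, 0).
Definition Ci : CC := (0, 1).
Definition Cadd (z w : CC) : CC := (Re z + Re w, Im z + Im w).
Definition Copp (z : CC) : CC := (- Re z, - Im z).
Definition Csub (z w : CC) : CC := Cadd z (Copp w).
Definition Cmul (z w : CC) : CC :=
  (Re z * Re w - Im z * Im w, Re z * Im w + Im z * Re w).
Definition Cconj (z : CC) : CC := (Re z, - Im z).
Definition Cnorm (z : CC) : R := sqrt (Re z * Re z + Im z * Im z).
Definition Cinv (z : CC) : CC :=
  (Re z / (Re z * Re z + Im z * Im z), - Im z / (Re z * Re z + Im z * Im z)).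
Definition Cdiv (z w : CC) : CC := Cmul z (Cinv w).
Definition Cpos (w : CC) : Prop := Im w = 0 /\ 0 < Re w.
Definition ipow (n : Z) : CC :=
  match Z.modulo n 4 with
  | 0%Z => C1
  | 1%Z => Ci
  | 2%Z => Copp C1
  | _ => Copp Ci
  end.

Definition SV : Type := (R * R)%type.
Definition Sadd (x y : SV) : SV := (fst x + fst y, snd x + snd y).
Definition Sscal (a : R) (x : SV) : SV := (a * fst x, a * snd x).
Definition S0 : SV := (0, 0).

(** SV (x) CC, elements are pairs of complex coordinates *)
Definition SC : Type := (CC * CC)%type.
Definition SCadd (x y : SC) : SC := (Cadd (fst x) (fst y), Cadd (snd x) (snd y)).
Definition SCscal (a : CC) (x : SC) : SC := (Cmul a (fst x), Cmul a (snd x)).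
Definition SC0 : SC := (C0, C0).
Definition SCconj (x : SC) : SC := (Cconj (fst x), Cconj (snd x)).
Definition SCre (x : SC) : SV := (Re (fst x), Re (snd x)).
Definition SCim (x : SC) : SV := (Im (fst x), Im (snd x)).

Definition is_symplectic_form (om : SV -> SV -> R) : Prop :=
  (forall a x y z, om (Sadd (Sscal a x) y) z = a * om x z + om y z) /\
  (forall x y, om y x = - om x y) /\
  (forall x, (forall y, om x y = 0) -> x = S0).

(** complex-bilinear extension of om to SV (x) CC *)
Definition omC (om : SV -> SV -> R) (x y : SC) : CC :=
  (om (SCre x) (SCre y) - om (SCim x) (SCim y),
   om (SCre x) (SCim y) + om (SCim x) (SCre y)).

Definition mat : Type := ((R * R) * (R * R))%type.
Definition m11 (A : mat) := fst (fst A).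
Definition m12 (A : mat) := snd (fst A).
Definition m21 (A : mat) := fst (snd A).
Definition m22 (A : mat) := snd (snd A).
Definition mk (a b c d : R) : mat := ((a, b), (c, d)).
Definition app (A : mat) (x : SV) : SV :=
  (m11 A * fst x + m12 A * snd x, m21 A * fst x + m22 A * snd x).
Definition appC (A : mat) (x : SC) : SC :=
  (Cadd (Cmul (RtoC (m11 A)) (fst x)) (Cmul (RtoC (m12 A)) (snd x)),
   Cadd (Cmul (RtoC (m21 A)) (fst x)) (Cmul (RtoC (m22 A)) (snd x))).
Definition idm : mat := mk 1 0 0 1.
Definition zerom : mat := mk 0 0 0 0.
Definition madd (A B : mat) : mat :=
  mk (m11 A + m11 B) (m12 A + m12 B) (m21 A + m21 B) (m22 A + m22 B).
Definition mopp (A : mat) : mat := mk (- m11 A) (- m12 A) (- m21 A) (- m22 A).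
Definition msub (A B : mat) : mat := madd A (mopp B).
Definition mscal (r : R) (A : mat) : mat :=
  mk (r * m11 A) (r * m12 A) (r * m21 A) (r * m22 A).
Definition mmul (A B : mat) : mat :=
  mk (m11 A * m11 B + m12 A * m21 B) (m11 A * m12 B + m12 A * m22 B)
     (m21 A * m11 B + m22 A * m21 B) (m21 A * m12 B + m22 A * m22 B).
Definition mdet (A : mat) : R := m11 A * m22 A - m12 A * m21 A.
Definition mtr (A : mat) : R := m11 A + m22 A.
(** inverse (adjugate / determinant); it is the inverse whenever one exists *)
Definition minv (A : mat) : mat :=
  mscal (/ mdet A) (mk (m22 A) (- m12 A) (- m21 A) (m11 A)).
Definition invertible (A : mat) : Prop :=
  exists B, mmul A B = idm /\ mmul B A = idm.
Definition mdist (A B : mat) : R :=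
  Rabs (m11 A - m11 B) + Rabs (m12 A - m12 B)
  + Rabs (m21 A - m21 B) + Rabs (m22 A - m22 B).

(** determinant of the complex matrix 1/2 id + i A, for A real *)
Definition det_half_iA (A : mat) : CC :=
  let a := ((/2)%R, m11 A) in let b := (0, m12 A) in
  let c := (0, m21 A) in let d := ((/2)%R, m22 A) in
  Csub (Cmul a d) (Cmul b c).

Definition Sp (om : SV -> SV -> R) (g : mat) : Prop :=
  forall x y, om (app g x) (app g y) = om x y.
Definition Sp_star (om : SV -> SV -> R) (g : mat) : Prop :=
  Sp om g /\ invertible (msub idm g).

Definition complex_subspace (E : SC -> Prop) : Prop :=
  E SC0 /\ (forall x y, E x -> E y -> E (SCadd x y)) /\
  (forall a x, E x -> E (SCscal a x)).
Definition lagrangian (om : SV -> SV -> R) (E : SC -> Prop) : Prop :=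
  complex_subspace E /\
  (forall y, E y <-> (forall x, E x -> omC om x y = C0)).
Definition positive_polarization (om : SV -> SV -> R) (E : SC -> Prop) : Prop :=
  lagrangian om E /\
  (forall x, E x -> x <> SC0 -> Cpos (Cmul (Cinv Ci) (omC om x (SCconj x)))).

Definition conjsp (E : SC -> Prop) : SC -> Prop := fun x => E (SCconj x).
Definition imsp (g : mat) (E : SC -> Prop) : SC -> Prop :=
  fun y => exists x, E x /\ y = appC g x.

(** [det_gE E g lam]: the endomorphism g^{-1} o pi_{E,gE} of the complex line E
    (pi_{E,gE} : E -> gE the projection onto gE with kernel conj(E)) is
    multiplication by lam, i.e. its determinant is lam. *)
Definition det_gE (E : SC -> Prop) (g : mat) (lam : CC) : Prop :=
  forall x, E x -> exists u w,
    E u /\ conjsp E w /\ x = SCadd (appC g u) w /\ u = SCscal lam x.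

Definition Mp (om : SV -> SV -> R) (E : SC -> Prop) (g : mat) (z : CC) : Prop :=
  Sp om g /\ exists lam, det_gE E g lam /\ Cmul z z = lam.
Definition Mp_star (om : SV -> SV -> R) (E : SC -> Prop) (g : mat) (z : CC) : Prop :=
  Mp om E g z /\ Sp_star om g.

Definition compatible_j (E : SC -> Prop) (j : mat) : Prop :=
  mmul j j = mopp idm /\ (forall x, E x <-> appC j x = SCscal Ci x).

(** sym(SV,j): symmetric for the scalar product (X,Y) |-> om X (j Y) *)
Definition sym (om : SV -> SV -> R) (j : mat) (A : mat) : Prop :=
  forall X Y, om (app A X) (app j Y) = om X (app j (app A Y)).

Definition sqrt_det_branch (om : SV -> SV -> R) (j : mat) (s : mat -> CC) : Prop :=
  (forall A, sym om j A -> Cmul (s A) (s A) = det_half_iA A) /\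
  (forall A, sym om j A -> forall eps, 0 < eps -> exists delta, 0 < delta /\
     forall B, sym om j B -> mdist B A < delta -> Cnorm (Csub (s B) (s A)) < eps) /\
  Cpos (s zerom).

Definition Ag (j g : mat) : mat :=
  mscal (/2) (mmul (madd idm g) (mmul (minv (msub idm g)) j)).

Definition arg_in_quadrant (z : CC) (k : Z) : Prop :=
  z <> C0 /\ exists th, IZR k * PI / 2 <= th < (IZR k + 1) * PI / 2 /\
    z = (Cnorm z * cos th, Cnorm z * sin th).

(* Main.v *)
Require Import Defs.
From Stdlib Require Import Reals ZArith Lra Lia Nsatz.
Open Scope R_scope.

Lemma om_formula om : is_symplectic_form om -> forall x y,
  om x y = om (1,0) (0,1) * (fst x * snd y - snd x * fst y).
Proof.
  intros [Hl [Ha Hn]].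
  assert (H0 : forall z, om S0 z = 0).
  { intros z. pose proof (Hl 1 S0 S0 z) as H.
    replace (Sadd (Sscal 1 S0) S0) with S0 in H by (unfold Sadd, Sscal, S0; simpl; f_equal; ring).
    lra. }
  assert (Hlin : forall a b x y z, om (Sadd (Sscal a x) (Sscal b y)) z = a * om x z + b * om y z).
  { intros. rewrite Hl.
    replace (Sscal b y) with (Sadd (Sscal b y) S0) by (unfold Sadd, Sscal, S0; simpl; destruct y; simpl; f_equal; ring).
    rewrite Hl, H0. ring. }
  intros [x1 x2] [y1 y2]; simpl.
  assert (Ex : forall x1 x2, (x1,x2) = Sadd (Sscal x1 (1,0)) (Sscal x2 (0,1))).
  { intros; unfold Sadd, Sscal; simpl; f_equal; ring. }
  rewrite (Ex x1 x2), Hlin.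
  rewrite (Ha _ (1,0)), (Ha _ (0,1)), (Ex y1 y2), !Hlin.
  assert (H11 : om (1,0) (1,0) = 0) by (pose proof (Ha (1,0) (1,0)); lra).
  assert (H22 : om (0,1) (0,1) = 0) by (pose proof (Ha (0,1) (0,1)); lra).
  rewrite H11, H22, (Ha (1,0) (0,1)). ring.
Qed.

Lemma om_c_nz om : is_symplectic_form om -> om (1,0) (0,1) <> 0.
Proof.
  intros Hs Hc. pose proof Hs as [_ [_ Hn]].
  assert (H : ((1,0) : SV) = S0).
  { apply Hn. intros y. rewrite (om_formula om Hs), Hc. ring. }
  unfold S0 in H. injection H. lra.
Qed.

Lemma om_ex om : is_symplectic_form om -> exists c, c <> 0 /\
  forall x y, om x y = c * (fst x * snd y - snd x * fst y).
Proof. intros Hs; exists (om (1,0) (0,1)); split; [apply om_c_nz | apply om_formula]; auto. Qed.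

Lemma j_form j : mmul j j = mopp idm ->
  m22 j = - m11 j /\ m11 j * m11 j + m12 j * m21 j = -1 /\ m12 j <> 0.
Proof.
  destruct j as [[p q] [r s]]; unfold mmul, mopp, idm, mk, m11, m12, m21, m22; simpl.
  intros H; injection H as H1 H2 H3 H4.
  assert (q <> 0).
  { intro; subst. pose proof (Rle_0_sqr p). unfold Rsqr in *. lra. }
  split; [|split]; auto.
  assert (q * (p + s) = 0) by lra.
  apply Rmult_integral in H0; destruct H0; [contradiction| lra].
Qed.

Lemma sp_det om g : is_symplectic_form om -> Sp om g -> mdet g = 1.
Proof.
  intros Hs Hg. pose proof (Hg (1,0) (0,1)) as H.
  destruct (om_ex om Hs) as [c [Hc Hom]].
  rewrite !Hom in H.
  destruct g as [[a b] [c0 d]]; unfold app, mdet, m11, m12, m21, m22 in *; simpl in *.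
  apply Rmult_eq_reg_l with c; auto.
  unfold m11,m12,m21,m22 in H; simpl in H. lra.
Qed.

Lemma inv_det A : invertible A -> mdet A <> 0.
Proof.
  intros [B [H _]] Hd.
  assert (mdet (mmul A B) = mdet A * mdet B).
  { destruct A as [[a b] [c d]], B as [[e f] [g h]]; unfold mdet, mmul, mk, m11, m12, m21, m22; simpl; ring. }
  rewrite H, Hd in H0. unfold mdet, idm, mk, m11, m12, m21, m22 in H0; simpl in H0. lra.
Qed.

Lemma lam_eq (a b c d p q r lr li : R) (E : SC -> Prop) (j : mat) :
  j = mk p q r (-p) ->
  (forall x, E x <-> appC j x = SCscal Ci x) ->
  det_gE E (mk a b c d) (lr, li) ->
  p*p + q*r = -1 ->
  lr*(q*q*c + p*q*(a-d) - (p*p+1)*b) - li*(q*(a+d)) = 0 /\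
  lr*(q*(a+d)) + li*(q*q*c + p*q*(a-d) - (p*p+1)*b) = 2*q.
Proof.
  intros Hj HE Hd Hpq.
  assert (Ev : E ((q,0),(-p,1))).
  { apply HE. rewrite Hj. unfold appC, SCscal, Cadd, Cmul, RtoC, Ci, Re, Im, mk, m11,m12,m21,m22; simpl.
    f_equal; f_equal; lra. }
  destruct (Hd _ Ev) as [u [w [Hu [Hw [Hx Hux]]]]].
  unfold conjsp in Hw. apply HE in Hw. rewrite Hj in Hw.
  destruct w as [[w1 w2] [w3 w4]]. subst u.
  unfold appC, SCscal, SCconj, SCadd, Cconj, Cadd, Cmul, RtoC, Ci, Re, Im, mk, m11,m12,m21,m22 in *; simpl in *.
  injection Hw as H1 H2 H3 H4. injection Hx as H5 H6 H7 H8.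
  assert (E1 : w1 = q - (a*(lr*q) + b*(lr*(-p) - li))) by lra.
  assert (E2 : w2 = - (a*(li*q) + b*(lr - li*p))) by lra.
  assert (E3 : w3 = -p - (c*(lr*q) + d*(lr*(-p) - li))) by lra.
  assert (E4 : w4 = 1 - (c*(li*q) + d*(lr - li*p))) by lra.
  subst w1 w2 w3 w4. split; lra.
Qed.

Lemma Ag_form a b cc d p q r : a*d - b*cc = 1 -> 2 - (a+d) <> 0 ->
  Ag (mk p q r (-p)) (mk a b cc d) =
  mk (/(2-(a+d))/2*((a-d)*p + 2*b*r)) (/(2-(a+d))/2*((a-d)*q - 2*b*p))
     (/(2-(a+d))/2*(2*cc*p - (a-d)*r)) (/(2-(a+d))/2*(2*cc*q + (a-d)*p)).
Proof.
  intros H1 H2.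
  unfold Ag, minv.
  replace (mdet (msub idm (mk a b cc d))) with (2 - (a+d))
    by (unfold mdet, msub, madd, mopp, idm, mk, m11, m12, m21, m22; simpl; lra).
  set (u := /(2-(a+d))). clearbody u.
  unfold mscal, mmul, msub, madd, mopp, idm, mk, m11, m12, m21, m22; simpl.
  assert (Hbc : b*cc = a*d - 1) by lra.
  f_equal; f_equal.
  - transitivity (u/2*((1 + a - d - (a*d - b*cc))*p + 2*b*r)); [field| rewrite H1; field].
  - transitivity (u/2*((1 + a - d - (a*d - b*cc))*q - 2*b*p)); [field| rewrite H1; field].
  - transitivity (u/2*(2*cc*p + (1 - a + d - (a*d - b*cc))*r)); [field| rewrite H1; field].
  - transitivity (u/2*(2*cc*q - (1 - a + d - (a*d - b*cc))*p)); [field| rewrite H1; field].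
Qed.

Lemma Cnorm_re z : Rabs (Re z) <= Cnorm z.
Proof.
  unfold Cnorm. rewrite <- sqrt_Rsqr_abs. apply sqrt_le_1_alt.
  unfold Rsqr. pose proof (Rle_0_sqr (Im z)); unfold Rsqr in *; lra.
Qed.

Lemma mdist_scal t t0 A : mdist (mscal t A) (mscal t0 A) =
  Rabs (t - t0) * (Rabs (m11 A) + Rabs (m12 A) + Rabs (m21 A) + Rabs (m22 A)).
Proof.
  unfold mdist, mscal, mk, m11, m12, m21, m22; simpl.
  rewrite <- !Rmult_minus_distr_r, !Rabs_mult. ring.
Qed.

Lemma cont_re om j s A : sqrt_det_branch om j s -> (forall t, sym om j (mscal t A)) ->
  continuity (fun t => Re (s (mscal t A))).
Proof.
  intros [_ [Hc _]] Hsym t0.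
  unfold continuity_pt, continue_in, limit1_in, limit_in; simpl; unfold R_dist.
  intros eps Heps.
  destruct (Hc _ (Hsym t0) eps Heps) as [delta [Hd Hdel]].
  set (M := Rabs (m11 A) + Rabs (m12 A) + Rabs (m21 A) + Rabs (m22 A)).
  assert (HM : 0 <= M) by (unfold M; pose proof (Rabs_pos (m11 A)); pose proof (Rabs_pos (m12 A));
    pose proof (Rabs_pos (m21 A)); pose proof (Rabs_pos (m22 A)); lra).
  exists (delta / (M+1)). split.
  { apply Rdiv_lt_0_compat; lra. }
  intros x [_ Hx].
  assert (Hm : mdist (mscal x A) (mscal t0 A) < delta).
  { rewrite mdist_scal. fold M.
    apply Rle_lt_trans with (Rabs (x - t0) * (M+1)).
    - apply Rmult_le_compat_l; [apply Rabs_pos| lra].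
    - replace delta with (delta/(M+1) * (M+1)) by (field; lra).
      apply Rmult_lt_compat_r; lra. }
  pose proof (Hdel _ (Hsym x) Hm) as H.
  pose proof (Cnorm_re (Csub (s (mscal x A)) (s (mscal t0 A)))) as H2.
  unfold Csub, Cadd, Copp, Re, Im in H, H2; simpl in H, H2. unfold Re, Rminus. lra.
Qed.

Lemma re_pos om j s A : sqrt_det_branch om j s -> (forall t, sym om j (mscal t A)) ->
  (forall t, Im (det_half_iA (mscal t A)) = 0 -> 0 < Re (det_half_iA (mscal t A))) ->
  0 < Re (s A).
Proof.
  intros Hs Hsym HD.
  pose proof (cont_re om j s A Hs Hsym) as Hc.
  destruct Hs as [Hsq [_ Hpos]].
  assert (Hnz : forall t, Re (s (mscal t A)) <> 0).
  { intros t H0. pose proof (Hsq _ (Hsym t)) as Hw.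
    set (w := s (mscal t A)) in *.
    destruct w as [wr wi]. unfold Re in H0; simpl in H0. subst wr.
    pose proof (HD t) as HDt. rewrite <- Hw in HDt.
    unfold Cmul, Re, Im in HDt; simpl in HDt.
    pose proof (Rle_0_sqr wi). unfold Rsqr in *.
    assert (0 * wi + wi * 0 = 0) by ring. specialize (HDt H0). lra. }
  assert (H0 : mscal 0 A = zerom).
  { unfold mscal, zerom, mk; f_equal; f_equal; ring. }
  assert (H1 : mscal 1 A = A).
  { destruct A as [[a b] [c d]]; unfold mscal, mk, m11, m12, m21, m22; simpl; f_equal; f_equal; ring. }
  assert (Hf0 : 0 < Re (s (mscal 0 A))) by (rewrite H0; destruct Hpos; auto).
  destruct (Rtotal_order (Re (s A)) 0) as [Hl|[He|Hg]]; auto.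
  - exfalso.
    destruct (IVT (fun t => - Re (s (mscal t A))) 0 1) as [z [_ Hz]].
    + apply continuity_opp; exact Hc.
    + lra.
    + simpl; lra.
    + simpl; rewrite H1; lra.
    + apply (Hnz z). simpl in Hz. lra.
  - exfalso. apply (Hnz 1). rewrite H1. auto.
Qed.

Lemma sym_of_eq om c p q r A : (forall x y, om x y = c*(fst x * snd y - snd x * fst y)) ->
  r*m12 A - p*m22 A + p*m11 A + q*m21 A = 0 -> sym om (mk p q r (-p)) A.
Proof.
  intros Hom He X Y. rewrite !Hom.
  destruct A as [[a11 a12] [a21 a22]], X as [x1 x2], Y as [y1 y2].
  unfold app, mk, m11, m12, m21, m22 in *; simpl in *.
  unfold m11, m12, m21, m22 in *; simpl in *. apply Rminus_diag_uniq.
  match goal with |- ?L - ?R = 0 =>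
    replace (L - R) with (- c * (x1*y2 - x2*y1) * (r * a12 - p * a22 + p * a11 + q * a21)) by ring end.
  rewrite He. ring.
Qed.

Lemma trace0_det p q r a11 a12 a21 a22 : q <> 0 -> p*p + q*r = -1 ->
  r*a12 - p*a22 + p*a11 + q*a21 = 0 -> a11 + a22 = 0 -> a11*a22 - a12*a21 <= 0.
Proof.
  intros Hq Hpq He Ht.
  assert (a22 = - a11) by lra. subst a22.
  assert (Ha21 : q*a21 = - r*a12 - 2*p*a11) by lra.
  assert (Hk : q*q*(a11*a11 + a12*a21) = (q*a11 - p*a12)*(q*a11 - p*a12) + a12*a12).
  { transitivity (q*q*a11*a11 + q*a12*(q*a21)); [ring|].
    rewrite Ha21.
    transitivity (q*q*a11*a11 - 2*p*q*a11*a12 - (q*r)*a12*a12); [ring|].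
    replace (q*r) with (-1 - p*p) by lra. ring. }
  assert (0 < q*q) by (destruct (Rlt_or_le 0 q); nra).
  assert (HX : 0 <= a11*a11 + a12*a21).
  { destruct (Rle_or_lt 0 (a11*a11 + a12*a21)) as [h|h]; auto.
    pose proof (Rle_0_sqr (q*a11 - p*a12)). pose proof (Rle_0_sqr a12). unfold Rsqr in *.
    assert (q*q*(a11*a11 + a12*a21) < 0) by (apply Rmult_pos_neg; auto).
    lra. }
  lra.
Qed.

Lemma trig_shift th n : cos (th - IZR n * (2*PI)) = cos th /\ sin (th - IZR n * (2*PI)) = sin th.
Proof.
  assert (Hs : sin (IZR n * PI) = 0) by (apply sin_eq_0_1; exists n; auto).
  assert (Hs2 : sin (IZR n * (2*PI)) = 0).
  { apply sin_eq_0_1; exists (2*n)%Z; rewrite mult_IZR; ring. }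
  assert (Hc2 : cos (IZR n * (2*PI)) = 1).
  { replace (IZR n * (2*PI)) with (2 * (IZR n * PI)) by ring. rewrite cos_2a_sin, Hs. ring. }
  rewrite cos_minus, sin_minus, Hs2, Hc2. split; ring.
Qed.

Lemma quad_signs zr zi k : arg_in_quadrant (zr,zi) k ->
  ((k mod 4 = 0)%Z -> 0 <= zr /\ 0 <= zi) /\ ((k mod 4 = 1)%Z -> zr <= 0 /\ 0 <= zi) /\
  ((k mod 4 = 2)%Z -> zr <= 0 /\ zi <= 0) /\ ((k mod 4 = 3)%Z -> 0 <= zr /\ zi <= 0).
Proof.
  intros [_ [th [[H1 H2] Hz]]].
  set (N := Cnorm (zr,zi)) in Hz.
  assert (HN : 0 <= N) by apply sqrt_pos.
  injection Hz as Hzr Hzi.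
  pose proof (Z_div_mod_eq_full k 4) as Hk.
  set (n := (k/4)%Z) in Hk. set (r := (k mod 4)%Z) in Hk |- *.
  destruct (trig_shift th n) as [Hc Hsn].
  set (t := th - IZR n * (2*PI)) in Hc, Hsn.
  rewrite <- Hc in Hzr. rewrite <- Hsn in Hzi.
  assert (Hk' : IZR k = 4 * IZR n + IZR r) by (rewrite Hk, plus_IZR, mult_IZR; ring).
  rewrite Hk' in H1, H2.
  assert (Ht1 : IZR r * PI / 2 <= t) by (unfold t; lra).
  assert (Ht2 : t < (IZR r + 1) * PI / 2) by (unfold t; lra).
  pose proof PI_RGT_0.
  split; [|split; [|split]]; intros Hr; rewrite Hr in Ht1, Ht2; simpl in Ht1, Ht2;
    rewrite Hzr, Hzi.
  - split; apply Rmult_le_pos; auto.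
    + apply cos_ge_0; lra.
    + apply sin_ge_0; lra.
  - split.
    + rewrite <- (Rmult_0_r N). apply Rmult_le_compat_l; auto. apply cos_le_0; lra.
    + apply Rmult_le_pos; auto. apply sin_ge_0; lra.
  - split; rewrite <- (Rmult_0_r N); apply Rmult_le_compat_l; auto.
    + apply cos_le_0; lra.
    + apply sin_le_0; lra.
  - split.
    + apply Rmult_le_pos; auto.
      replace (cos t) with (cos (t - IZR 1 * (2*PI))) by (apply trig_shift).
      apply cos_ge_0; simpl; lra.
    + rewrite <- (Rmult_0_r N); apply Rmult_le_compat_l; auto. apply sin_le_0; lra.
Qed.

Lemma ipow_red k e : ipow (k + Z.b2z (Z.odd (k+e))) = ipow (k mod 4 + Z.b2z (Z.odd (k mod 4 + e))).
Proof.
  pose proof (Z_div_mod_eq_full k 4) as Hk.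
  set (n := (k/4)%Z) in Hk. set (r := (k mod 4)%Z) in Hk |- *.
  assert (Ho : Z.odd (k + e) = Z.odd (r + e)).
  { rewrite Hk. replace (4*n + r + e)%Z with (r + e + 2*(2*n))%Z by ring. apply Z.odd_add_mul_2. }
  rewrite Ho. unfold ipow.
  replace ((k + Z.b2z (Z.odd (r + e))) mod 4)%Z with ((r + Z.b2z (Z.odd (r + e))) mod 4)%Z; auto.
  rewrite Hk. replace (4*n + r + Z.b2z (Z.odd (r + e)))%Z with (r + Z.b2z (Z.odd (r + e)) + n*4)%Z by ring.
  rewrite Z.mod_add; auto. lia.
Qed.

Lemma sq_root_pos x rho : 0 < rho -> x*x = /(rho*rho) -> 0 < x -> x = /rho.
Proof.
  intros Hr Hx Hp.
  assert (H : (x*rho - 1)*(x*rho + 1) = 0).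
  { replace ((x*rho - 1)*(x*rho + 1)) with ((x*x)*(rho*rho) - 1) by ring.
    rewrite Hx. field. lra. }
  apply Rmult_integral in H. destruct H as [H|H].
  - apply Rmult_eq_reg_r with rho; [|lra]. rewrite Rinv_l; lra.
  - exfalso. assert (0 < x*rho) by (apply Rmult_lt_0_compat; auto). lra.
Qed.

Lemma sq_root_neg x rho : 0 < rho -> x*x = /(rho*rho) -> x < 0 -> x = -/rho.
Proof.
  intros Hr Hx Hp.
  assert (- x = /rho). { apply sq_root_pos; auto; [rewrite <- Hx; ring | lra]. }
  lra.
Qed.

Lemma cdiv_forms rho : rho <> 0 ->
  Cdiv Defs.C1 (RtoC rho) = (/rho, 0) /\ Cdiv (Copp Defs.C1) (RtoC rho) = (-/rho, 0) /\
  Cdiv Ci (RtoC rho) = (0, /rho) /\ Cdiv (Copp Ci) (RtoC rho) = (0, -/rho).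
Proof.
  intros H. unfold Cdiv, Cmul, Cinv, Defs.C1, Ci, Copp, RtoC, Re, Im; simpl.
  repeat split; f_equal; field; auto.
Qed.

Lemma final_sign zr zi wr wi T k : T <> 2 -> 0 < wr ->
  (zr*wr - zi*wi)*(zr*wr - zi*wi) - (zr*wi+zi*wr)*(zr*wi+zi*wr) = /(T-2) ->
  (zr*wr - zi*wi)*(zr*wi + zi*wr) + (zr*wi+zi*wr)*(zr*wr - zi*wi) = 0 ->
  arg_in_quadrant (zr,zi) k ->
  (zr*wr - zi*wi, zr*wi + zi*wr) =
    Cdiv (ipow (k + Z.b2z (Z.odd (k + (if Rlt_dec 2 T then 0%Z else 1%Z)))))
         (RtoC (sqrt (Rabs (2 - T)))).
Proof.
  intros HT Hw H1 H2 Hq.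
  destruct (quad_signs zr zi k Hq) as [Q0 [Q1 [Q2 Q3]]].
  rewrite ipow_red.
  pose proof (Z.mod_pos_bound k 4 ltac:(lia)) as Hb.
  set (Wr := zr*wr - zi*wi) in *. set (Wi := zr*wi + zi*wr) in *.
  assert (Id1 : Wr*wr + Wi*wi = zr*(wr*wr+wi*wi)) by (unfold Wr, Wi; ring).
  assert (Id2 : Wi*wr - Wr*wi = zi*(wr*wr+wi*wi)) by (unfold Wr, Wi; ring).
  assert (Hn : 0 < wr*wr + wi*wi) by nra.
  assert (HWW : Wr * Wi = 0) by lra.
  destruct (Rlt_dec 2 T) as [HgT|HlT].
  - set (rho := sqrt (T-2)).
    assert (Hrho : 0 < rho) by (apply sqrt_lt_R0; lra).
    assert (Hrr : rho*rho = T-2) by (apply sqrt_sqrt; lra).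
    rewrite Rabs_left by lra. replace (- (2 - T)) with (T-2) by ring. fold rho.
    destruct (cdiv_forms rho ltac:(lra)) as [F1 [F2 _]].
    assert (Hpos : 0 < /(T-2)) by (apply Rinv_0_lt_compat; lra).
    assert (HWi : Wi = 0).
    { apply Rmult_integral in HWW; destruct HWW as [h|h]; auto.
      rewrite h in H1. nra. }
    rewrite HWi in H1, Id1. rewrite HWi.
    assert (HWr2 : Wr*Wr = /(rho*rho)) by (rewrite Hrr; lra).
    assert (HWr0 : Wr <> 0) by (intro h; rewrite h in H1; lra).
    assert (Hpos_case : 0 <= zr -> Wr = /rho).
    { intros h. apply sq_root_pos; auto.
      assert (0 <= Wr*wr) by (rewrite Rmult_0_l, Rplus_0_r in Id1; rewrite Id1; apply Rmult_le_pos; lra).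
      destruct (Rtotal_order Wr 0) as [h'|[h'|h']]; [nra|contradiction|auto]. }
    assert (Hneg_case : zr <= 0 -> Wr = -/rho).
    { intros h. apply sq_root_neg; auto.
      assert (Wr*wr <= 0) by (rewrite Rmult_0_l, Rplus_0_r in Id1; rewrite Id1; nra).
      destruct (Rtotal_order Wr 0) as [h'|[h'|h']]; [auto|contradiction|nra]. }
    assert (Hc : (k mod 4 = 0 \/ k mod 4 = 1 \/ k mod 4 = 2 \/ k mod 4 = 3)%Z) by lia.
    destruct Hc as [Hc|[Hc|[Hc|Hc]]]; rewrite Hc; simpl ipow.
    + replace (ipow 0) with Defs.C1 by reflexivity; rewrite F1, Hpos_case; [auto| apply Q0; auto].
    + replace (ipow 2) with (Copp Defs.C1) by reflexivity; rewrite F2, Hneg_case; [auto| apply Q1; auto].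
    + replace (ipow 2) with (Copp Defs.C1) by reflexivity; rewrite F2, Hneg_case; [auto| apply Q2; auto].
    + replace (ipow 4) with Defs.C1 by reflexivity; rewrite F1, Hpos_case; [auto| apply Q3; auto].
  - assert (HlT' : T < 2) by lra.
    set (rho := sqrt (2-T)).
    assert (Hrho : 0 < rho) by (apply sqrt_lt_R0; lra).
    assert (Hrr : rho*rho = 2-T) by (apply sqrt_sqrt; lra).
    rewrite Rabs_right by lra. fold rho.
    destruct (cdiv_forms rho ltac:(lra)) as [_ [_ [F3 F4]]].
    assert (Hneg : /(T-2) < 0) by (apply Rinv_lt_0_compat; lra).
    assert (HWr : Wr = 0).
    { apply Rmult_integral in HWW; destruct HWW as [h|h]; auto.
      rewrite h in H1. nra. }
    rewrite HWr in H1, Id2. rewrite HWr.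
    assert (HWi2 : Wi*Wi = /(rho*rho)).
    { rewrite Hrr. replace (2 - T) with (- (T-2)) by ring. rewrite Rinv_opp. lra. }
    assert (HWi0 : Wi <> 0) by (intro h; rewrite h in H1; lra).
    assert (Hpos_case : 0 <= zi -> Wi = /rho).
    { intros h. apply sq_root_pos; auto.
      assert (0 <= Wi*wr) by (rewrite Rmult_0_l, Rminus_0_r in Id2; rewrite Id2; apply Rmult_le_pos; lra).
      destruct (Rtotal_order Wi 0) as [h'|[h'|h']]; [nra|contradiction|auto]. }
    assert (Hneg_case : zi <= 0 -> Wi = -/rho).
    { intros h. apply sq_root_neg; auto.
      assert (Wi*wr <= 0) by (rewrite Rmult_0_l, Rminus_0_r in Id2; rewrite Id2; nra).
      destruct (Rtotal_order Wi 0) as [h'|[h'|h']]; [auto|contradiction|nra]. }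
    assert (Hc : (k mod 4 = 0 \/ k mod 4 = 1 \/ k mod 4 = 2 \/ k mod 4 = 3)%Z) by lia.
    destruct Hc as [Hc|[Hc|[Hc|Hc]]]; rewrite Hc; simpl ipow.
    + replace (ipow 1) with Ci by reflexivity; rewrite F3, Hpos_case; [auto| apply Q0; auto].
    + replace (ipow 1) with Ci by reflexivity; rewrite F3, Hpos_case; [auto| apply Q1; auto].
    + replace (ipow 3) with (Copp Ci) by reflexivity; rewrite F4, Hneg_case; [auto| apply Q2; auto].
    + replace (ipow 3) with (Copp Ci) by reflexivity; rewrite F4, Hneg_case; [auto| apply Q3; auto].
Qed.

Theorem mainTheorem6 :
  forall (om : SV -> SV -> R) (E : SC -> Prop) (j : mat) (s : mat -> CC)
         (g : mat) (z : CC) (k : Z),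
    is_symplectic_form om ->
    positive_polarization om E ->
    compatible_j E j ->
    sqrt_det_branch om j s ->
    Mp_star om E g z ->
    arg_in_quadrant z k ->
    let eps : Z := if Rlt_dec 2 (mtr g) then 0%Z else 1%Z in
    let m : Z := (k + Z.b2z (Z.odd (k + eps)))%Z in
    Cmul z (s (Ag j g)) =
      Cdiv (ipow m) (RtoC (sqrt (Rabs (mdet (msub idm g))))).
Proof.
  intros om E j s g z k Hs _ [Hjj HE] Hsq [[Hsp [[lr li] [Hdg Hzz]]] [_ Hinv]] Harg eps m.
  destruct (om_ex om Hs) as [c [Hc Hom]].
  destruct (j_form j Hjj) as [Hj22 [Hpq Hq]].
  destruct j as [[p q] [r s0]]. unfold m11, m12, m21, m22 in *; simpl in *. subst s0.
  change ((p,q),(r,-p)) with (mk p q r (-p)) in *.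
  pose proof (sp_det om g Hs Hsp) as Hdet.
  pose proof (inv_det _ Hinv) as Hinv'.
  destruct g as [[a b] [cc d]].
  change ((a,b),(cc,d)) with (mk a b cc d) in *.
  unfold mdet, mk, m11, m12, m21, m22 in Hdet; simpl in Hdet.
  assert (HD2 : mdet (msub idm (mk a b cc d)) = 2 - (a+d)).
  { unfold mdet, msub, madd, mopp, idm, mk, m11, m12, m21, m22; simpl. lra. }
  rewrite HD2 in Hinv' |- *.
  assert (Htr : mtr (mk a b cc d) = a + d) by reflexivity.
  unfold m, eps; clear m eps. rewrite Htr.
  destruct (lam_eq a b cc d p q r lr li E (mk p q r (-p)) eq_refl HE Hdg Hpq) as [L1 L2].
  rewrite (Ag_form a b cc d p q r Hdet Hinv') in *.
  set (u := / (2 - (a + d))) in *.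
  assert (Hu : u * (2 - (a+d)) = 1) by (unfold u; field; auto).
  clearbody u.
  set (N11 := (a - d) * p + 2 * b * r). set (N12 := (a - d) * q - 2 * b * p).
  set (N21 := 2 * cc * p - (a - d) * r). set (N22 := 2 * cc * q + (a - d) * p).
  set (A := mk (u / 2 * N11) (u / 2 * N12) (u / 2 * N21) (u / 2 * N22)).
  assert (Hsym : forall t, sym om (mk p q r (-p)) (mscal t A)).
  { intros t. apply (sym_of_eq om c); auto.
    unfold mscal, A, mk, m11, m12, m21, m22, N11, N12, N21, N22; simpl. unfold Rdiv. ring. }
  assert (HN : N11*N22 - N12*N21 = 4 - (a+d)*(a+d)).
  { unfold N11, N12, N21, N22.
    transitivity ((-(a-d)*(a-d) - 4*(b*cc))*(-(p*p+q*r))); [ring|].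
    rewrite Hpq. replace (b*cc) with (a*d - 1) by lra. ring. }
  assert (HDt : forall t, Im (det_half_iA (mscal t A)) = 0 -> 0 < Re (det_half_iA (mscal t A))).
  { intros t. unfold det_half_iA, Csub, Cadd, Copp, Cmul, mscal, A, mk, m11, m12, m21, m22, Re, Im; simpl.
    intros HI.
    assert (HI' : t * (u/2*N11 + u/2*N22) = 0) by lra.
    apply Rmult_integral in HI'. destruct HI' as [Ht|Ht].
    - subst t. lra.
    - pose proof (trace0_det p q r (u/2*N11) (u/2*N12) (u/2*N21) (u/2*N22) Hq Hpq) as Htd.
      assert (He : r * (u/2*N12) - p * (u/2*N22) + p * (u/2*N11) + q * (u/2*N21) = 0)
        by (unfold N11, N12, N21, N22, Rdiv; ring).
      specialize (Htd He Ht).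
      assert (0 <= t*t) by nra.
      assert (0 <= (t*t) * (-((u/2*N11)*(u/2*N22) - (u/2*N12)*(u/2*N21)))) by (apply Rmult_le_pos; lra).
      nra. }
  pose proof (re_pos om _ s A Hsq Hsym HDt) as Hre.
  destruct Hsq as [Hsq _].
  assert (HsA : sym om (mk p q r (-p)) A).
  { replace A with (mscal 1 A) by (unfold mscal, A, mk, m11, m12, m21, m22; simpl; f_equal; f_equal; ring).
    apply Hsym. }
  pose proof (Hsq A HsA) as Hw.
  destruct (s A) as [wr wi]. destruct z as [zr zi].
  unfold Re in Hre; simpl in Hre.
  unfold det_half_iA, Csub, Cadd, Copp, Cmul, A, mk, m11, m12, m21, m22, Re, Im in Hw, Hzz; simpl in Hw, Hzz.
  injection Hw as Hw1 Hw2. injection Hzz as Hz1 Hz2.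
  assert (HK : lr * (a+d) + li * (q*cc + p*(a-d) + r*b) = 2).
  { apply Rmult_eq_reg_l with q; auto.
    replace (q * (lr * (a+d) + li * (q*cc + p*(a-d) + r*b))) with
      (lr * (q * (a + d)) + li * (q * q * cc + p * q * (a - d) + (q*r) * b)) by ring.
    replace (q*r) with (- (p*p+1)) by lra. lra. }
  assert (HK2 : lr * (q*cc + p*(a-d) + r*b) - li * (a+d) = 0).
  { apply Rmult_eq_reg_l with q; auto.
    replace (q * (lr * (q*cc + p*(a-d) + r*b) - li * (a+d))) with
      (lr * (q * q * cc + p * q * (a - d) + (q*r) * b) - li * (q * (a + d))) by ring.
    replace (q*r) with (- (p*p+1)) by lra. lra. }
  assert (HDr : wr*wr - wi*wi = - (a+d) * u / 2).
  { rewrite Hw1.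
    transitivity (/4 - u*u/4*(N11*N22 - N12*N21)); [field|].
    rewrite HN. replace (4 - (a+d)*(a+d)) with ((2-(a+d))*(2+(a+d))) by ring.
    replace (u*u/4*((2-(a+d))*(2+(a+d)))) with ((u*(2-(a+d)))*(u*(2+(a+d)))/4) by field.
    rewrite Hu. lra. }
  assert (HDi : wr*wi + wi*wr = u/2 * (q*cc + p*(a-d) + r*b)).
  { rewrite Hw2. unfold N11, N22. field. }
  change (Cmul (zr,zi) (wr,wi)) with (zr*wr - zi*wi, zr*wi + zi*wr).
  apply final_sign; auto.
  - intro h. apply Hinv'. lra.
  - transitivity ((zr*zr - zi*zi)*(wr*wr - wi*wi) - (zr*zi + zi*zr)*(wr*wi + wi*wr)); [ring|].
    rewrite Hz1, Hz2, HDr, HDi.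
    replace (/ (a + d - 2)) with (- u) by (rewrite <- (Rmult_1_l (/ (a+d-2))), <- Hu; field; lra).
    transitivity (- u/2 * (lr * (a+d) + li * (q*cc + p*(a-d) + r*b))); [field|].
    rewrite HK. field.
  - transitivity (2*((zr*zr - zi*zi)*(wr*wi + wi*wr) + (zr*zi + zi*zr)*(wr*wr - wi*wi))/2); [field|].
    rewrite Hz1, Hz2, HDr, HDi.
    transitivity (u/2 * (lr * (q*cc + p*(a-d) + r*b) - li * (a+d))); [field|].
    rewrite HK2. ring.
Qed.
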